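(* Consider the delay differential system \[ \begin{aligned} \dot T(t)&= s-dT(t)+aT(t)\Big(1-\frac{T(t)+I(t)}{T_{\max}}\Big)-\frac{bT(t)V(t)}{1+\alpha V(t)},\\ \dot I(t)&= \frac{bT(t-\tau)V(t-\tau)}{1+\alpha V(t-\tau)}+aI(t)\Big(1-\frac{T(t)+I(t)}{T_{\max}}\Big)-\mu I(t),\\ \dot V(t)&= pI(t)-cV(t), \end{aligned} \] with positive constants $s,d,a,T_{\max},b,\alpha,\mu,p,c$ and $\tau\ge0$. Let \[ T_0=\frac{T_{\max}}{2a}\Big(a-d+\sqrt{(a-d)^2+\tfrac{4as}{T_{\max}}}\Big),\qquad R_0=\frac{1}{\mu}\Big[\frac{bpT_0}{c}+a\Big(1-\frac{T_0}{T_{\max}}\Big)\Big]. \] If $R_0>1$ and the unique infected equilibrium $E_2=(T_2,I_2,V_2)$ (with $T_2,I_2,V_2>0$) satisfies $a\le d+\frac{a}{T_{\max}}(T_2+I_2)$, then $E_2$ is globally asymptotically stable (with respect to solutions with positive initial data) for any $\tau\ge0$.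
   Context: When $R_0>1$ the system has a unique equilibrium with all components positive, called the infected equilibrium. *)

(* Defs.v *)
From Stdlib Require Import Reals.
From Coquelicot Require Import Coquelicot.
Open Scope R_scope.

Definition incid (b alpha T V : R) : R := b * T * V / (1 + alpha * V).

Definition logist (Tmax T I : R) : R := 1 - (T + I) / Tmax.

Definition T0 (s d a Tmax : R) : R :=
  Tmax / (2 * a) * (a - d + sqrt ((a - d) ^ 2 + 4 * a * s / Tmax)).

Definition basic_R0 (s d a Tmax b mu p c : R) : R :=
  / mu * (b * p * T0 s d a Tmax / c + a * (1 - T0 s d a Tmax / Tmax)).

Definition is_equilibrium (s d a Tmax b alpha mu p c : R) (Te Ie Ve : R) : Prop :=
  s - d * Te + a * Te * logist Tmax Te Ie - incid b alpha Te Ve = 0 /\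
  incid b alpha Te Ve + a * Ie * logist Tmax Te Ie - mu * Ie = 0 /\
  p * Ie - c * Ve = 0.

(* A global solution on [-tau, +oo): the functions are continuous, their
   restriction to [-tau,0] is the initial history, and for every t > 0 they are
   differentiable with derivatives given by the delay system. (Values before
   -tau are irrelevant; continuity everywhere is harmless.) *)
Definition is_solution (s d a Tmax b alpha mu p c tau : R) (T I V : R -> R) : Prop :=
  (forall t, continuous T t) /\ (forall t, continuous I t) /\ (forall t, continuous V t) /\
  forall t, 0 < t ->
    is_derive T t (s - d * T t + a * T t * logist Tmax (T t) (I t)
                   - incid b alpha (T t) (V t)) /\
    is_derive I t (incid b alpha (T (t - tau)) (V (t - tau))
                   + a * I t * logist Tmax (T t) (I t) - mu * I t) /\
    is_derive V t (p * I t - c * V t).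

Definition positive_initial (tau : R) (T I V : R -> R) : Prop :=
  forall th, -tau <= th <= 0 -> 0 < T th /\ 0 < I th /\ 0 < V th.

(* Global asymptotic stability of (Te, Ie, Ve) w.r.t. solutions with positive
   initial data: Lyapunov stability (sup-norm on the history segment) plus
   global attractivity. *)
Definition GAS (s d a Tmax b alpha mu p c tau : R) (Te Ie Ve : R) : Prop :=
  (forall eps, 0 < eps -> exists delta, 0 < delta /\
     forall T I V : R -> R,
       is_solution s d a Tmax b alpha mu p c tau T I V ->
       positive_initial tau T I V ->
       (forall th, -tau <= th <= 0 ->
          Rabs (T th - Te) < delta /\ Rabs (I th - Ie) < delta /\ Rabs (V th - Ve) < delta) ->
       forall t, 0 <= t ->
          Rabs (T t - Te) < eps /\ Rabs (I t - Ie) < eps /\ Rabs (V t - Ve) < eps) /\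
  (forall T I V : R -> R,
     is_solution s d a Tmax b alpha mu p c tau T I V ->
     positive_initial tau T I V ->
     is_lim T p_infty Te /\ is_lim I p_infty Ie /\ is_lim V p_infty Ve).

(* Main.v *)
Require Import Defs.
From Stdlib Require Import Reals.
From Coquelicot Require Import Coquelicot.
From Stdlib Require Import Lra Psatz Classical ZArith Lia.
Open Scope R_scope.

Lemma ln_le1 x : 0 < x -> ln x <= x - 1.
Proof.
  intros Hx. rewrite <- (ln_exp (x - 1)).
  destruct (Req_dec x 1) as [->|Hn].
  - replace (1-1) with 0 by ring. rewrite exp_0. lra.
  - apply Rlt_le, ln_increasing; auto. pose proof (exp_ineq1 (x-1)). lra.
Qed.

Lemma ln_lt1 x : 0 < x -> x <> 1 -> ln x < x - 1.
Proof.
  intros Hx Hn. rewrite <- (ln_exp (x - 1)).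
  apply ln_increasing; auto. pose proof (exp_ineq1 (x-1)). assert (x-1<>0) by lra. specialize (H H0). lra.
Qed.

Definition gf (r : R) : R := r - 1 - ln r.

Lemma gf_ge0 r : 0 < r -> 0 <= gf r.
Proof. intros; unfold gf; pose proof (ln_le1 r H); lra. Qed.

Lemma gf_gt0 r : 0 < r -> r <> 1 -> 0 < gf r.
Proof. intros; unfold gf; pose proof (ln_lt1 r H H0); lra. Qed.

Lemma gf_le r : 0 < r -> gf r <= (r - 1)^2 / r.
Proof.
  intros Hr. unfold gf. pose proof (ln_le1 (/ r) (Rinv_0_lt_compat _ Hr)).
  rewrite ln_Rinv in H by auto.
  assert ((r-1)^2/r = r - 2 + /r) by (field; lra). lra.
Qed.

Lemma ln_half x : 0 < x -> ln x <= x / 2.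
Proof.
  intros Hx. replace x with ((x/2) * 2) at 1 by field.
  rewrite ln_mult by lra. pose proof (ln_le1 (x/2) ltac:(lra)). pose proof (ln_le1 2 ltac:(lra)). lra.
Qed.

Lemma gf_upper r K : 0 < r -> gf r <= K -> r <= 2 * (K + 1).
Proof. intros Hr H. unfold gf in H. pose proof (ln_half r Hr). lra. Qed.

Lemma gf_mono_up r1 r2 : 1 <= r1 -> r1 <= r2 -> gf r1 <= gf r2.
Proof.
  intros H1 H2. unfold gf.
  assert (ln r2 - ln r1 <= r2 / r1 - 1).
  { replace (ln r2) with (ln (r2 / r1 * r1)) by (f_equal; field; lra).
    rewrite ln_mult. 2:{ apply Rdiv_lt_0_compat; lra. } 2: lra.
    pose proof (ln_le1 (r2/r1) ltac:(apply Rdiv_lt_0_compat; lra)). lra. }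
  assert (r2 / r1 - 1 <= r2 - r1).
  { apply Rmult_le_reg_r with r1. lra. unfold Rdiv. field_simplify; try lra. nra. }
  lra.
Qed.

Lemma gf_mono_down r1 r2 : 0 < r2 -> r2 <= r1 -> r1 <= 1 -> gf r1 <= gf r2.
Proof.
  intros H0 H1 H2. unfold gf.
  assert (ln r2 - ln r1 <= r2 / r1 - 1).
  { replace (ln r2) with (ln (r2 / r1 * r1)) by (f_equal; field; lra).
    rewrite ln_mult. 2:{ apply Rdiv_lt_0_compat; lra. } 2: lra.
    pose proof (ln_le1 (r2/r1) ltac:(apply Rdiv_lt_0_compat; lra)). lra. }
  assert (r2 / r1 - 1 <= r2 - r1).
  { apply Rmult_le_reg_r with r1. lra. unfold Rdiv. field_simplify; try lra. nra. }
  lra.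
Qed.

Lemma gf_away rho : 0 < rho < 1 ->
  exists c, 0 < c /\ forall r, 0 < r -> rho <= Rabs (r - 1) -> c <= gf r.
Proof.
  intros Hr. exists (Rmin (gf (1 - rho)) (gf (1 + rho))). split.
  - apply Rmin_glb_lt; apply gf_gt0; lra.
  - intros r Hr0 Ha. destruct (Rle_lt_dec r 1).
    + rewrite Rabs_left1 in Ha by lra.
      eapply Rle_trans. apply Rmin_l. apply gf_mono_down; lra.
    + rewrite Rabs_right in Ha by lra.
      eapply Rle_trans. apply Rmin_r. apply gf_mono_up; lra.
Qed.

Lemma mvt_bound (f df : R -> R) (a b m : R) : a <= b ->
  (forall x, a <= x <= b -> continuous f x) ->
  (forall x, a < x < b -> is_derive f x (df x)) ->
  (forall x, a < x < b -> df x <= m) ->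
  f b - f a <= m * (b - a).
Proof.
  intros Hab Hc Hd Hm.
  set (df' := fun x => if Rlt_dec a x then if Rlt_dec x b then df x else m else m).
  destruct (MVT_gen f a b df') as [c [Hc1 Hc2]].
  - rewrite Rmin_left, Rmax_right by lra. intros x Hx. unfold df'.
    destruct (Rlt_dec a x); [|lra]. destruct (Rlt_dec x b); [|lra]. apply Hd; lra.
  - rewrite Rmin_left, Rmax_right by lra. intros x Hx.
    apply continuity_pt_filterlim. apply Hc; lra.
  - rewrite Hc2. rewrite Rmin_left, Rmax_right in Hc1 by lra.
    apply Rmult_le_compat_r. lra. unfold df'.
    destruct (Rlt_dec a c); [|lra]. destruct (Rlt_dec c b); [|lra]. apply Hm; lra.
Qed.

Lemma mvt_bound_low (f df : R -> R) (a b m : R) : a <= b ->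
  (forall x, a <= x <= b -> continuous f x) ->
  (forall x, a < x < b -> is_derive f x (df x)) ->
  (forall x, a < x < b -> m <= df x) ->
  m * (b - a) <= f b - f a.
Proof.
  intros Hab Hc Hd Hm.
  pose proof (mvt_bound (fun x => - f x) (fun x => - df x) a b (-m) Hab) as H.
  assert (- f b - - f a <= - m * (b - a)); [|lra].
  apply H.
  - intros x Hx. apply (continuous_opp f). apply Hc; auto.
  - intros x Hx. apply (is_derive_opp f). apply Hd; auto.
  - intros x Hx. specialize (Hm x Hx). lra.
Qed.

Lemma pos_int (f df : R -> R) (K a0 b0 : R) : a0 <= b0 ->
  (forall x, a0 <= x <= b0 -> continuous f x) ->
  (forall x, a0 < x < b0 -> is_derive f x (df x)) ->
  (forall x, a0 < x < b0 -> - K * f x <= df x) ->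
  0 < f a0 -> 0 < f b0.
Proof.
  intros Hab Hc Hd Hm H0.
  pose proof (mvt_bound_low (fun x => f x * exp (K * x))
     (fun x => df x * exp (K*x) + f x * (K * exp (K * x))) a0 b0 0 Hab) as H.
  assert (0 * (b0 - a0) <= f b0 * exp (K * b0) - f a0 * exp (K * a0)).
  { apply H.
    - intros x Hx. apply (continuous_mult f (fun x => exp (K*x))). apply Hc; auto.
      apply (ex_derive_continuous (fun x => exp (K * x))). auto_derive; auto.
    - intros x Hx. apply (is_derive_mult f (fun x => exp (K*x))). apply Hd; auto.
      auto_derive; auto. ring. intros; apply Rmult_comm.
    - intros x Hx. specialize (Hm x Hx). pose proof (exp_pos (K*x)). nra. }
  pose proof (exp_pos (K*a0)). pose proof (exp_pos (K*b0)).
  assert (0 < f b0 * exp (K * b0)) by nra. nra.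
Qed.

Lemma cont_pos_nbhd (f : R -> R) x : continuous f x -> 0 < f x ->
  exists h, 0 < h /\ forall y, Rabs (y - x) < h -> 0 < f y.
Proof.
  intros Hc Hp. apply continuity_pt_filterlim in Hc.
  destruct (Hc (f x) Hp) as [h [Hh Hy]]. exists h. split; auto.
  intros y Hyx. destruct (Req_dec y x) as [->|Hn]; auto.
  assert (R_dist (f y) (f x) < f x).
  { apply Hy. split. unfold D_x, no_cond. split; auto. exact Hyx. }
  unfold R_dist in H. apply Rabs_def2 in H. lra.
Qed.

Lemma incid_bounds b alpha T V : 0 < b -> 0 < alpha -> 0 < T -> 0 <= V ->
  0 <= incid b alpha T V <= b * T / alpha.
Proof.
  intros. unfold incid. split.
  - apply Rdiv_le_0_compat. apply Rmult_le_pos; [nra|lra]. nra.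
  - apply Rmult_le_reg_r with (1 + alpha * V). nra.
    unfold Rdiv. rewrite Rmult_assoc, Rinv_l by nra.
    replace (b * T * / alpha * (1 + alpha * V)) with (b*T/alpha + b*T*V) by (field; lra).
    assert (0 <= b*T/alpha) by (apply Rdiv_le_0_compat; nra). nra.
Qed.

Section Pos.
Variables s d a Tmax b alpha mu p c tau : R.
Hypotheses (hs : 0 < s) (hd : 0 < d) (ha : 0 < a) (hTmax : 0 < Tmax) (hb : 0 < b)
  (halpha : 0 < alpha) (hmu : 0 < mu) (hp : 0 < p) (hc : 0 < c) (htau : 0 <= tau).
Variables T I V : R -> R.
Hypothesis Hsol : is_solution s d a Tmax b alpha mu p c tau T I V.
Hypothesis Hinit : positive_initial tau T I V.

Definition Ppos t := 0 < T t /\ 0 < I t /\ 0 < V t.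

Lemma cT t : continuous T t. Proof. apply Hsol. Qed.
Lemma cI t : continuous I t. Proof. apply Hsol. Qed.
Lemma cV t : continuous V t. Proof. apply Hsol. Qed.

Lemma pos_all : forall t, -tau <= t -> Ppos t.
Proof.
  assert (H0 : forall y, -tau <= y <= 0 -> Ppos y) by (intros; apply Hinit; auto).
  intros t0 Ht0. destruct (Rle_lt_dec t0 0) as [Hle|Hgt]; [apply H0; lra|].
  apply NNPP. intros Hbad.
  set (E := fun x => 0 <= x /\ forall y, 0 <= y <= x -> Ppos y).
  assert (Hb : bound E).
  { exists t0. intros x [Hx1 Hx2]. destruct (Rle_lt_dec x t0); auto.
    exfalso. apply Hbad. apply Hx2. lra. }
  assert (He : exists x, E x).
  { exists 0. split. lra. intros y Hy. apply H0. lra. }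
  destruct (completeness E Hb He) as [ts [Hub Hlub]].
  assert (Hts0 : 0 <= ts) by (apply Hub; split; [lra|intros y Hy; apply H0; lra]).
  assert (F1 : forall y, -tau <= y < ts -> Ppos y).
  { intros y Hy. destruct (Rle_lt_dec y 0). apply H0; lra.
    apply NNPP. intros Hn.
    assert (is_upper_bound E y).
    { intros x [Hx1 Hx2]. destruct (Rle_lt_dec x y); auto. exfalso. apply Hn, Hx2. lra. }
    specialize (Hlub y H). lra. }
  assert (F2 : Ppos ts).
  { destruct (Req_dec ts 0) as [->|Hne]. apply H0; lra.
    set (a0 := ts / 2).
    assert (Ha0 : 0 < a0 < ts) by (unfold a0; lra).
    destruct (continuity_ab_maj (fun x => T x + I x) a0 ts) as [Mx [HM _]]. lra.
    { intros x _. apply continuity_pt_filterlim. apply (continuous_plus T I); [apply cT|apply cI]. }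
    set (M := Rabs (T Mx + I Mx)).
    assert (HMb : forall x, a0 <= x <= ts -> T x + I x <= M).
    { intros x Hx. specialize (HM x Hx). simpl in HM. unfold M. pose proof (Rle_abs (T Mx + I Mx)). lra. }
    assert (HM0 : 0 <= M) by apply Rabs_pos.
    destruct Hsol as [_ [_ [_ Hder]]].
    assert (Pa0 : Ppos a0) by (apply F1; lra).
    destruct Pa0 as [PT0 [PI0 PV0]].
    assert (Hlog : forall x, a0 < x < ts -> forall X, 0 <= X ->
              - (a * M / Tmax) * X <= a * X * logist Tmax (T x) (I x)).
    { intros x Hx X HX. unfold logist. specialize (HMb x ltac:(lra)).
      assert ((T x + I x) / Tmax <= M / Tmax) by (apply Rmult_le_compat_r; [left; apply Rinv_0_lt_compat; lra| lra]).
      assert (0 <= a * X) by nra.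
      assert (a * X * ((T x + I x) / Tmax) <= a * X * (M / Tmax)) by (apply Rmult_le_compat_l; lra).
      replace (- (a * M / Tmax) * X) with (- (a * X * (M / Tmax))) by (field; lra).
      nra. }
    split; [|split].
    - apply (pos_int T (fun x => s - d * T x + a * T x * logist Tmax (T x) (I x) - incid b alpha (T x) (V x))
              (d + a * M / Tmax + b / alpha) a0 ts); try lra; auto.
      + intros; apply cT.
      + intros x Hx. apply Hder. lra.
      + intros x Hx. destruct (F1 x ltac:(lra)) as [A1 [A2 A3]].
        pose proof (incid_bounds b alpha (T x) (V x) hb halpha A1 ltac:(lra)).
        pose proof (Hlog x Hx (T x) ltac:(lra)).
        assert (b * T x / alpha = (b / alpha) * T x) by (field; lra). lra.
    - apply (pos_int I (fun x => incid b alpha (T (x - tau)) (V (x - tau)) + a * I x * logist Tmax (T x) (I x) - mu * I x)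
              (a * M / Tmax + mu) a0 ts); try lra; auto.
      + intros; apply cI.
      + intros x Hx. apply Hder. lra.
      + intros x Hx. destruct (F1 x ltac:(lra)) as [A1 [A2 A3]].
        destruct (F1 (x - tau) ltac:(lra)) as [B1 [B2 B3]].
        pose proof (incid_bounds b alpha (T (x-tau)) (V (x-tau)) hb halpha B1 ltac:(lra)).
        pose proof (Hlog x Hx (I x) ltac:(lra)). lra.
    - apply (pos_int V (fun x => p * I x - c * V x) c a0 ts); try lra; auto.
      + intros; apply cV.
      + intros x Hx. apply Hder. lra.
      + intros x Hx. destruct (F1 x ltac:(lra)) as [A1 [A2 A3]]. nra. }
  destruct F2 as [P1 [P2 P3]].
  destruct (cont_pos_nbhd T ts (cT ts) P1) as [h1 [Hh1 K1]].
  destruct (cont_pos_nbhd I ts (cI ts) P2) as [h2 [Hh2 K2]].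
  destruct (cont_pos_nbhd V ts (cV ts) P3) as [h3 [Hh3 K3]].
  set (h := Rmin h1 (Rmin h2 h3)).
  assert (Hh : 0 < h) by (unfold h; repeat apply Rmin_glb_lt; auto).
  assert (h <= h1 /\ h <= h2 /\ h <= h3).
  { unfold h. split. apply Rmin_l. split. eapply Rle_trans. apply Rmin_r. apply Rmin_l.
    eapply Rle_trans. apply Rmin_r. apply Rmin_r. }
  assert (E (ts + h / 2)).
  { split. lra. intros y Hy. destruct (Rlt_le_dec y ts). apply F1; lra.
    assert (Rabs (y - ts) < h) by (rewrite Rabs_right; lra).
    split; [apply K1|split; [apply K2|apply K3]]; lra. }
  specialize (Hub _ H1). lra.
Qed.

End Pos.

Lemma incid_pos b alpha X Z : 0 < b -> 0 < alpha -> 0 < X -> 0 < Z -> 0 < incid b alpha X Z.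
Proof.
  intros. unfold incid. assert (0 < b * X * Z) by (apply Rmult_lt_0_compat; [apply Rmult_lt_0_compat|]; lra).
  assert (0 < 1 + alpha * Z) by (assert (0 < alpha * Z) by (apply Rmult_lt_0_compat; lra); lra).
  unfold Rdiv. apply Rmult_lt_0_compat; [lra|apply Rinv_0_lt_compat; lra].
Qed.

Lemma key_ineq s d a Tmax b alpha mu p c T2 I2 V2 X Y Z Xd Zd :
  0 < d -> 0 < a -> 0 < Tmax -> 0 < b -> 0 < alpha -> 0 < p ->
  0 < T2 -> 0 < I2 -> 0 < V2 -> 0 < X -> 0 < Y -> 0 < Z -> 0 < Xd -> 0 < Zd ->
  s = d * T2 - a * T2 * logist Tmax T2 I2 + incid b alpha T2 V2 ->
  mu = (incid b alpha T2 V2 + a * I2 * logist Tmax T2 I2) / I2 ->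
  c = p * I2 / V2 ->
  a <= d + a / Tmax * (T2 + I2) ->
  let F2 := incid b alpha T2 V2 in
  (s - d * X + a * X * logist Tmax X Y - incid b alpha X Z) * (1 - T2 / X)
  + (incid b alpha Xd Zd + a * Y * logist Tmax X Y - mu * Y) * (1 - I2 / Y)
  + F2 / (p * I2) * ((p * Y - c * Z) * (1 - V2 / Z))
  + F2 * (gf (incid b alpha X Z / F2) - gf (incid b alpha Xd Zd / F2))
  <= - (a * (X - T2 + Y - I2)^2 / Tmax + F2 * gf (T2 / X)
        + F2 * alpha * (Z - V2)^2 / (V2 * (1 + alpha * Z) * (1 + alpha * V2))).
Proof.
  intros hd ha hTm hb hal hp hT2 hI2 hV2 hX hY hZ hXd hZd Hs Hmu Hc Hcond F2.
  assert (HF2 : 0 < F2) by (apply incid_pos; auto).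
  set (F := incid b alpha X Z). set (Fd := incid b alpha Xd Zd).
  assert (HF : 0 < F) by (apply incid_pos; auto).
  assert (HFd : 0 < Fd) by (apply incid_pos; auto).
  set (x := X / T2). set (y := Y / I2). set (z := Z / V2).
  set (h := (1 + alpha * V2) / (1 + alpha * Z)). set (w := Fd / F2).
  assert (Hx : 0 < x) by (unfold x; apply Rdiv_lt_0_compat; lra).
  assert (Hy : 0 < y) by (unfold y; apply Rdiv_lt_0_compat; lra).
  assert (Hz : 0 < z) by (unfold z; apply Rdiv_lt_0_compat; lra).
  assert (Hh : 0 < h) by (unfold h; apply Rdiv_lt_0_compat; nra).
  assert (Hw : 0 < w) by (unfold w; apply Rdiv_lt_0_compat; lra).
  assert (HFr : F / F2 = x * z * h).
  { unfold F, F2, x, z, h, incid. field. repeat split; nra. }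
  assert (Hlog : ln (Fd / F2) = ln (F / F2) + ln (T2 / X) + ln (w / y) + ln (/ h) + ln (y / z)).
  { assert (Fd / F2 = (F / F2) * (T2 / X) * (w / y) * (/ h) * (y / z)).
    { rewrite HFr. unfold w, x. field. repeat split; try lra. }
    rewrite H.
    assert (0 < T2 / X) by (apply Rdiv_lt_0_compat; lra).
    assert (0 < w / y) by (apply Rdiv_lt_0_compat; lra).
    assert (0 < / h) by (apply Rinv_0_lt_compat; lra).
    assert (0 < y / z) by (apply Rdiv_lt_0_compat; lra).
    assert (0 < F / F2) by (apply Rdiv_lt_0_compat; lra).
    assert (M : forall u v, 0<u -> 0<v -> 0<u*v) by (intros; apply Rmult_lt_0_compat; auto).
    rewrite !ln_mult. all: try lra. all: repeat (first [assumption | apply M]). }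
  pose proof (ln_le1 (w / y) ltac:(apply Rdiv_lt_0_compat; lra)) as L1.
  pose proof (ln_le1 (/ h) ltac:(apply Rinv_0_lt_compat; lra)) as L2.
  pose proof (ln_le1 (y / z) ltac:(apply Rdiv_lt_0_compat; lra)) as L3.
  unfold gf. fold F Fd.
  set (LL := ln (T2 / X)).
  set (L2e := logist Tmax T2 I2).
  assert (Hid :
    (s - d * X + a * X * logist Tmax X Y - F) * (1 - T2 / X)
  + (Fd + a * Y * logist Tmax X Y - mu * Y) * (1 - I2 / Y)
  + F2 / (p * I2) * ((p * Y - c * Z) * (1 - V2 / Z))
  + F2 * (F / F2 - Fd / F2)
  + F2 * (w / y + / h + y / z - 3)
  + a * (X - T2 + Y - I2)^2 / Tmax + F2 * (T2 / X - 1)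
  + F2 * alpha * (Z - V2)^2 / (V2 * (1 + alpha * Z) * (1 + alpha * V2))
  = - (d - a * L2e) * (X - T2)^2 / X).
  { rewrite Hs, Hmu, Hc. unfold w, h, y, z, L2e, logist, F, Fd, F2, incid.
    field. repeat split; nra. }
  assert (0 <= (d - a * L2e) * (X - T2)^2 / X).
  { apply Rdiv_le_0_compat; [|lra]. apply Rmult_le_pos; [|apply pow2_ge_0].
    unfold L2e, logist. assert (a * ((T2 + I2) / Tmax) = a / Tmax * (T2 + I2)) by (field; lra). nra. }
  assert (F2 * ln (w / y) <= F2 * (w / y - 1)) by (apply Rmult_le_compat_l; lra).
  assert (F2 * ln (/ h) <= F2 * (/ h - 1)) by (apply Rmult_le_compat_l; lra).
  assert (F2 * ln (y / z) <= F2 * (y / z - 1)) by (apply Rmult_le_compat_l; lra).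
  unfold w in *. rewrite Hlog.
  fold LL. lra.
Qed.

Lemma dgf (f : R -> R) t l K : is_derive f t l -> 0 < f t -> 0 < K ->
  is_derive (fun t => K * gf (f t / K)) t (l * (1 - K / f t)).
Proof.
  intros Hd Hp HK. unfold gf.
  assert (Hex : ex_derive f t) by (exists l; auto).
  auto_derive.
  - repeat split; auto. apply Rdiv_lt_0_compat; auto.
  - replace (Derive (fun x => f x) t) with l by (symmetry; apply is_derive_unique; auto). field. split; lra.
Qed.

Lemma cgf (f : R -> R) t K : continuous f t -> 0 < f t -> 0 < K ->
  continuous (fun t => K * gf (f t / K)) t.
Proof.
  intros Hc Hp HK.
  apply (continuous_comp f (fun u => K * gf (u / K))); auto.
  apply (ex_derive_continuous (fun u => K * gf (u / K)) (f t)). unfold gf. auto_derive. repeat split; auto.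
  apply Rdiv_lt_0_compat; auto.
Qed.

Lemma cmul (f g : R -> R) x : continuous f x -> continuous g x -> continuous (fun y => f y * g y) x.
Proof. intros; apply (continuous_mult f g); auto. Qed.
Lemma cplus (f g : R -> R) x : continuous f x -> continuous g x -> continuous (fun y => f y + g y) x.
Proof. intros; apply (continuous_plus f g); auto. Qed.
Lemma ccst (k : R) x : continuous (fun _ : R => k) x.
Proof. apply continuous_const. Qed.

Lemma c_incid b alpha (T V : R -> R) x : continuous T x -> continuous V x -> 1 + alpha * V x <> 0 ->
  continuous (fun y => incid b alpha (T y) (V y)) x.
Proof.
  intros HT HV Hn. unfold incid, Rdiv.
  apply (cmul (fun y => b * T y * V y) (fun y => / (1 + alpha * V y))).
  - apply (cmul (fun y => b * T y) V); auto. apply (cmul (fun _ => b) T); auto. apply ccst.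
  - apply (continuous_Rinv_comp (fun y => 1 + alpha * V y)); auto.
    apply (cplus (fun _ => 1) (fun y => alpha * V y)). apply ccst.
    apply (cmul (fun _ => alpha) V); auto. apply ccst.
Qed.

Lemma c_gfdiv (h : R -> R) F2 x : continuous h x -> 0 < h x -> 0 < F2 ->
  continuous (fun y => gf (h y / F2)) x.
Proof.
  intros Hc Hp HF.
  apply (continuous_comp h (fun u => gf (u / F2))); auto.
  apply (ex_derive_continuous (fun u => gf (u / F2)) (h x)). unfold gf. auto_derive. repeat split; auto.
  apply Rdiv_lt_0_compat; auto.
Qed.

Lemma lip (X dX : R -> R) t0 K :
  (forall x, t0 <= x -> continuous X x) ->
  (forall x, t0 < x -> is_derive X x (dX x)) ->
  (forall x, t0 < x -> Rabs (dX x) <= K) ->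
  forall u v, t0 <= u -> t0 <= v -> Rabs (X u - X v) <= K * Rabs (u - v).
Proof.
  intros Hc Hd Hb.
  assert (H : forall u v, t0 <= u <= v -> Rabs (X v - X u) <= K * (v - u)).
  { intros u v Huv.
    pose proof (mvt_bound X dX u v K ltac:(lra) ltac:(intros; apply Hc; lra)
      ltac:(intros; apply Hd; lra) ltac:(intros x Hx; specialize (Hb x ltac:(lra)); apply Rabs_le_between in Hb; lra)).
    pose proof (mvt_bound_low X dX u v (-K) ltac:(lra) ltac:(intros; apply Hc; lra)
      ltac:(intros; apply Hd; lra) ltac:(intros x Hx; specialize (Hb x ltac:(lra)); apply Rabs_le_between in Hb; lra)).
    apply Rabs_le. lra. }
  intros u v Hu Hv. destruct (Rle_lt_dec u v).
  - rewrite Rabs_minus_sym. rewrite (Rabs_left1 (u - v)) by lra.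
    replace (- (u - v)) with (v - u) by ring. apply H; lra.
  - rewrite (Rabs_right (u - v)) by lra. apply H; lra.
Qed.

Lemma attract (U X : R -> R) (Xs t0 K : R) :
  0 < K ->
  (forall t, t0 <= t -> 0 <= U t) ->
  (forall t1 t2, t0 <= t1 <= t2 -> U t2 <= U t1) ->
  (forall u v, t0 <= u -> t0 <= v -> Rabs (X u - X v) <= K * Rabs (u - v)) ->
  (forall e, 0 < e -> exists m, 0 < m /\ forall t1 t2, t0 <= t1 <= t2 ->
      (forall x, t1 < x < t2 -> e <= Rabs (X x - Xs)) -> U t2 <= U t1 - m * (t2 - t1)) ->
  forall e, 0 < e -> exists N, forall t, N <= t -> Rabs (X t - Xs) < e.
Proof.
  intros HK Hpos Hmono Hlip Hdrop e He.
  apply NNPP. intros Hn.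
  assert (Hbad : forall N, exists t, N <= t /\ e <= Rabs (X t - Xs)).
  { intros N. apply NNPP. intros H2. apply Hn. exists N. intros t Ht.
    apply Rnot_le_lt. intros H3. apply H2. exists t. auto. }
  destruct (Hdrop (e / 2) ltac:(lra)) as [m [Hm Hdr]].
  set (h := e / (2 * K)).
  assert (Hh : 0 < h) by (unfold h; apply Rdiv_lt_0_compat; lra).
  assert (Hstep : forall n : nat, exists t, t0 <= t /\ U t <= U t0 - INR n * (m * h)).
  { induction n as [|n IH].
    - exists t0. split. lra. simpl. lra.
    - destruct IH as [tn [Htn1 Htn2]].
      destruct (Hbad tn) as [t [Ht1 Ht2]].
      exists (t + h). split. lra.
      assert (U (t + h) <= U t - m * (t + h - t)).
      { apply Hdr. lra. intros x Hx.
        pose proof (Hlip x t ltac:(lra) ltac:(lra)).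
        rewrite (Rabs_right (x - t)) in H by lra.
        assert (K * (x - t) <= K * h) by (apply Rmult_le_compat_l; lra).
        assert (K * h = e / 2) by (unfold h; field; lra).
        pose proof (Rabs_triang_inv (X t - Xs) (X t - X x)) as Htr.
        replace (X t - Xs - (X t - X x)) with (X x - Xs) in Htr by ring.
        rewrite Rabs_minus_sym in H. lra. }
      pose proof (Hmono tn t ltac:(lra)).
      rewrite S_INR. lra. }
  assert (HD : 0 < m * h) by nra.
  destruct (archimed (U t0 / (m * h))) as [Ha _].
  destruct (Hstep (Z.to_nat (up (U t0 / (m * h))))) as [t [Ht1 Ht2]].
  pose proof (Hpos t Ht1).
  assert (0 <= U t0) by (apply Hpos; lra).
  assert (0 < up (U t0 / (m * h)))%Z.
  { apply lt_IZR. assert (0 <= U t0 / (m*h)) by (apply Rdiv_le_0_compat; lra). lra. }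
  rewrite INR_IZR_INZ, Z2Nat.id in Ht2 by lia.
  assert (U t0 / (m * h) * (m * h) = U t0) by (field; lra).
  assert (U t0 < IZR (up (U t0 / (m * h))) * (m * h)) by nra.
  lra.
Qed.

Lemma lim_of (X : R -> R) Xs :
  (forall e, 0 < e -> exists N, forall t, N <= t -> Rabs (X t - Xs) < e) ->
  is_lim X p_infty Xs.
Proof.
  intros H. apply is_lim_spec. intros eps. destruct (H eps (cond_pos eps)) as [N HN].
  exists N. intros x Hx. apply HN. lra.
Qed.

Lemma gf_near1 rho r : 0 < rho <= 1/2 -> Rabs (r - 1) <= rho -> gf r <= 2 * rho^2.
Proof.
  intros Hr Ha. apply Rabs_le_between in Ha.
  assert (0 < r) by lra.
  eapply Rle_trans. apply gf_le; auto.
  apply Rmult_le_reg_r with r; auto. unfold Rdiv. rewrite Rmult_assoc, Rinv_l by lra.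
  assert ((r - 1)^2 <= rho^2) by nra. nra.
Qed.

Lemma gf_near2 rho r : 0 < rho <= 1/2 -> (1 - rho)^2 <= r <= (1 + rho)^2 -> gf r <= 36 * rho^2.
Proof.
  intros Hr Ha.
  assert (1/4 <= r) by nra.
  eapply Rle_trans. apply gf_le; lra.
  apply Rmult_le_reg_r with r; [lra|]. unfold Rdiv. rewrite Rmult_assoc, Rinv_l by lra.
  assert (-3 * rho <= r - 1 <= 3 * rho) by nra.
  assert ((r - 1)^2 <= 9 * rho^2) by nra. nra.
Qed.

Lemma incid_ratio b alpha T2 V2 X Z rho : 0 < b -> 0 < alpha -> 0 < T2 -> 0 < V2 ->
  0 < rho < 1 -> Rabs (X / T2 - 1) <= rho -> Rabs (Z / V2 - 1) <= rho ->
  (1 - rho)^2 <= incid b alpha X Z / incid b alpha T2 V2 <= (1 + rho)^2.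
Proof.
  intros hb hal hT hV hr HX HZ.
  apply Rabs_le_between in HX. apply Rabs_le_between in HZ.
  set (x := X / T2) in *. set (z := Z / V2) in *.
  assert (HXe : X = x * T2) by (unfold x; field; lra).
  assert (HZe : Z = z * V2) by (unfold z; field; lra).
  clearbody x z. subst X Z.
  set (q := z * (1 + alpha * V2) / (1 + alpha * (z * V2))).
  assert (Hq : incid b alpha (x * T2) (z * V2) / incid b alpha T2 V2 = x * q).
  { assert (0 < z) by lra. assert (0 < x) by lra.
    assert (0 < alpha * (z * V2)) by (apply Rmult_lt_0_compat; [lra|apply Rmult_lt_0_compat; lra]).
    assert (0 < alpha * V2) by (apply Rmult_lt_0_compat; lra).
    assert (0 < b * T2 * V2) by (apply Rmult_lt_0_compat; [apply Rmult_lt_0_compat|]; lra).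
    unfold q, incid. field. repeat split; lra. }
  assert (Hqb : 1 - rho <= q <= 1 + rho).
  { unfold q. assert (0 < z) by lra.
    assert (0 < alpha * (z * V2)) by (apply Rmult_lt_0_compat; [lra|apply Rmult_lt_0_compat; lra]).
    assert (0 < alpha * V2) by (apply Rmult_lt_0_compat; lra).
    assert (0 < 1 + alpha * (z * V2)) by lra.
    destruct (Rle_lt_dec 1 z).
    - split.
      + apply Rmult_le_reg_r with (1 + alpha * (z * V2)); auto. unfold Rdiv. rewrite Rmult_assoc, Rinv_l by lra.
        nra.
      + apply Rmult_le_reg_r with (1 + alpha * (z * V2)); auto. unfold Rdiv. rewrite Rmult_assoc, Rinv_l by lra.
        nra.
    - split.
      + apply Rmult_le_reg_r with (1 + alpha * (z * V2)); auto. unfold Rdiv. rewrite Rmult_assoc, Rinv_l by lra.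
        nra.
      + apply Rmult_le_reg_r with (1 + alpha * (z * V2)); auto. unfold Rdiv. rewrite Rmult_assoc, Rinv_l by lra.
        nra. }
  rewrite Hq. split; nra.
Qed.

Lemma frac_mono u v w z : 0 <= w -> w <= u -> 0 < v -> v <= z -> w / z <= u / v.
Proof.
  intros. unfold Rdiv. apply Rmult_le_compat; try lra.
  left; apply Rinv_0_lt_compat; lra.
  apply Rinv_le_contravar; lra.
Qed.

Lemma rel_dev X Xs : 0 < Xs -> Rabs (X - Xs) <= Rabs (X / Xs - 1) * Xs /\ Rabs (X / Xs - 1) * Xs <= Rabs (X - Xs).
Proof.
  intros H. replace (X / Xs - 1) with ((X - Xs) / Xs) by (field; lra).
  rewrite Rabs_div by lra. rewrite (Rabs_right Xs) by lra.
  replace (Rabs (X - Xs) / Xs * Xs) with (Rabs (X - Xs)) by (field; lra). lra.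
Qed.

Lemma dplus (f g : R -> R) x df dg : is_derive f x df -> is_derive g x dg ->
  is_derive (fun y => f y + g y) x (df + dg).
Proof. intros; apply (is_derive_plus f g); auto. Qed.
Lemma dscal (f : R -> R) k x df : is_derive f x df -> is_derive (fun y => k * f y) x (k * df).
Proof. intros. apply (is_derive_scal f); auto. Qed.

Section Lyap.
Variables s d a Tmax b alpha mu p c tau : R.
Hypotheses (hs : 0 < s) (hd : 0 < d) (ha : 0 < a) (hTmax : 0 < Tmax) (hb : 0 < b)
  (halpha : 0 < alpha) (hmu : 0 < mu) (hp : 0 < p) (hc : 0 < c) (htau : 0 <= tau).
Variables T2 I2 V2 : R.
Hypotheses (hT2 : 0 < T2) (hI2 : 0 < I2) (hV2 : 0 < V2)
  (heq : is_equilibrium s d a Tmax b alpha mu p c T2 I2 V2)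
  (hcond : a <= d + a / Tmax * (T2 + I2)).
Variables T I V : R -> R.
Hypothesis Hsol : is_solution s d a Tmax b alpha mu p c tau T I V.
Hypothesis Hinit : positive_initial tau T I V.

Lemma pos t : -tau <= t -> 0 < T t /\ 0 < I t /\ 0 < V t.
Proof. intros. exact (pos_all s d a Tmax b alpha mu p c tau hs ha hTmax hb halpha hp htau T I V Hsol Hinit t H). Qed.

Lemma contT t : continuous T t. Proof. apply Hsol. Qed.
Lemma contI t : continuous I t. Proof. apply Hsol. Qed.
Lemma contV t : continuous V t. Proof. apply Hsol. Qed.

Definition F2 := incid b alpha T2 V2.
Lemma F2pos : 0 < F2. Proof. apply incid_pos; auto. Qed.

Definition clamp x := (x - tau + Rabs (x + tau)) / 2.
Lemma clamp_ge x : -tau <= clamp x.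
Proof. unfold clamp. destruct (Rle_lt_dec 0 (x + tau)).
  rewrite Rabs_right; lra. rewrite Rabs_left; lra. Qed.
Lemma clamp_id x : -tau <= x -> clamp x = x.
Proof. intros. unfold clamp. rewrite Rabs_right; lra. Qed.
Lemma clamp_cont x : continuous clamp x.
Proof.
  unfold clamp, Rdiv.
  apply (cmul (fun x => x - tau + Rabs (x + tau)) (fun _ => /2)); [|apply ccst].
  apply (cplus (fun x => x - tau) (fun x => Rabs (x + tau))).
  - apply (cplus (fun x => x) (fun _ => - tau)). apply continuous_id. apply ccst.
  - apply (continuous_Rabs_comp (fun x => x + tau)).
    apply (cplus (fun x => x) (fun _ => tau)). apply continuous_id. apply ccst.
Qed.

Definition Gv x := gf (incid b alpha (T x) (V x) / F2).
Definition Gc x := Gv (clamp x).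

Lemma Gv_cont x : -tau <= x -> continuous Gv x.
Proof.
  intros Hx. destruct (pos x Hx) as [P1 [P2 P3]]. unfold Gv.
  apply (c_gfdiv (fun y => incid b alpha (T y) (V y))).
  - apply c_incid. apply contT. apply contV. nra.
  - apply incid_pos; auto.
  - apply F2pos.
Qed.

Lemma Gc_cont x : continuous Gc x.
Proof.
  unfold Gc. apply (continuous_comp clamp Gv). apply clamp_cont. apply Gv_cont, clamp_ge.
Qed.

Lemma Gv_ge0 x : -tau <= x -> 0 <= Gv x.
Proof.
  intros Hx. destruct (pos x Hx) as [P1 [P2 P3]]. unfold Gv. apply gf_ge0.
  apply Rdiv_lt_0_compat. apply incid_pos; auto. apply F2pos.
Qed.

Lemma Gc_ge0 x : 0 <= Gc x.
Proof. unfold Gc. apply Gv_ge0, clamp_ge. Qed.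

Lemma exR a0 b0 : ex_RInt Gc a0 b0.
Proof. apply (@ex_RInt_continuous R_CompleteNormedModule Gc). intros; apply Gc_cont. Qed.

Definition J t := RInt Gc (t - tau) t.

Lemma J_der t : is_derive J t (Gc t - Gc (t - tau)).
Proof.
  unfold J.
  pose proof (is_derive_RInt_bound_comp Gc (fun x y => RInt Gc x y) (fun t => t - tau) (fun t => t) 1 1 t) as H.
  replace (Gc t - Gc (t - tau)) with (minus (scal 1 (Gc t)) (scal 1 (Gc (t - tau)))).
  apply H.
  - apply filter_forall. intros; apply (@RInt_correct R_CompleteNormedModule), exR.
  - apply Gc_cont.
  - apply Gc_cont.
  - auto_derive; auto; ring.
  - auto_derive; auto.
  - unfold minus, plus, opp, scal; simpl; unfold mult; simpl. ring.
Qed.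

Lemma J_cont t : continuous J t.
Proof. apply (@ex_derive_continuous R_AbsRing R_NormedModule J t). exists (Gc t - Gc (t - tau)). apply J_der. Qed.

Lemma J_ge0 t : 0 <= J t.
Proof. unfold J. apply RInt_ge_0. lra. apply exR. intros; apply Gc_ge0. Qed.

Definition cVc := F2 / (p * I2).

Definition U t := T2 * gf (T t / T2) + I2 * gf (I t / I2) + cVc * (V2 * gf (V t / V2)) + F2 * J t.

Definition U' t :=
  (s - d * T t + a * T t * logist Tmax (T t) (I t) - incid b alpha (T t) (V t)) * (1 - T2 / T t)
  + (incid b alpha (T (t - tau)) (V (t - tau)) + a * I t * logist Tmax (T t) (I t) - mu * I t) * (1 - I2 / I t)
  + cVc * ((p * I t - c * V t) * (1 - V2 / V t))
  + F2 * (Gc t - Gc (t - tau)).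

Lemma U_der t : 0 < t -> is_derive U t (U' t).
Proof.
  intros Ht. destruct (pos t ltac:(lra)) as [P1 [P2 P3]].
  destruct Hsol as [_ [_ [_ Hd]]]. destruct (Hd t Ht) as [D1 [D2 D3]].
  unfold U, U'.
  apply dplus; [apply dplus; [apply dplus|]|].
  - apply dgf; auto.
  - apply dgf; auto.
  - apply dscal. apply dgf; auto.
  - apply dscal. apply J_der.
Qed.

Lemma U_cont t : 0 <= t -> continuous U t.
Proof.
  intros Ht. destruct (pos t ltac:(lra)) as [P1 [P2 P3]]. unfold U.
  apply (cplus (fun t => T2 * gf (T t / T2) + I2 * gf (I t / I2) + cVc * (V2 * gf (V t / V2))) (fun t => F2 * J t)).
  apply (cplus (fun t => T2 * gf (T t / T2) + I2 * gf (I t / I2)) (fun t => cVc * (V2 * gf (V t / V2)))).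
  apply (cplus (fun t => T2 * gf (T t / T2)) (fun t => I2 * gf (I t / I2))).
  - apply cgf; auto. apply contT.
  - apply cgf; auto. apply contI.
  - apply (cmul (fun _ => cVc) (fun t => V2 * gf (V t / V2))). apply ccst. apply cgf; auto. apply contV.
  - apply (cmul (fun _ => F2) J). apply ccst. apply J_cont.
Qed.

Definition Phi t := a * (T t - T2 + I t - I2)^2 / Tmax + F2 * gf (T2 / T t)
   + F2 * alpha * (V t - V2)^2 / (V2 * (1 + alpha * V t) * (1 + alpha * V2)).

Lemma U'_le t : 0 < t -> U' t <= - Phi t.
Proof.
  intros Ht. destruct (pos t ltac:(lra)) as [P1 [P2 P3]].
  destruct (pos (t - tau) ltac:(lra)) as [Q1 [Q2 Q3]].
  destruct heq as [E1 [E2 E3]].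
  unfold U', Phi, cVc, Gc. rewrite !clamp_id by lra. unfold Gv.
  apply key_ineq; auto.
  - lra.
  - replace (incid b alpha T2 V2 + a * I2 * logist Tmax T2 I2) with (mu * I2) by lra. field. lra.
  - replace (p * I2) with (c * V2) by lra. field. lra.
Qed.

Lemma cVc_pos : 0 < cVc.
Proof. unfold cVc. apply Rdiv_lt_0_compat. apply F2pos. nra. Qed.

Lemma Phi_ge0_parts t : -tau <= t ->
  0 <= a * (T t - T2 + I t - I2)^2 / Tmax /\ 0 <= F2 * gf (T2 / T t) /\
  0 <= F2 * alpha * (V t - V2)^2 / (V2 * (1 + alpha * V t) * (1 + alpha * V2)).
Proof.
  intros Ht. destruct (pos t Ht) as [P1 [P2 P3]]. pose proof F2pos.
  split; [|split].
  - apply Rdiv_le_0_compat; [|lra]. apply Rmult_le_pos; [lra|apply pow2_ge_0].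
  - apply Rmult_le_pos; [lra|]. apply gf_ge0. apply Rdiv_lt_0_compat; lra.
  - apply Rdiv_le_0_compat. apply Rmult_le_pos; [nra|apply pow2_ge_0].
    apply Rmult_lt_0_compat; [apply Rmult_lt_0_compat|]; nra.
Qed.

Lemma U_drop t1 t2 m : 0 <= t1 <= t2 -> (forall x, t1 < x < t2 -> m <= Phi x) ->
  U t2 <= U t1 - m * (t2 - t1).
Proof.
  intros Ht Hm.
  pose proof (mvt_bound U U' t1 t2 (- m) ltac:(lra)) as H.
  assert (U t2 - U t1 <= - m * (t2 - t1)); [|lra].
  apply H.
  - intros; apply U_cont; lra.
  - intros; apply U_der; lra.
  - intros x Hx. pose proof (U'_le x ltac:(lra)). specialize (Hm x Hx). lra.
Qed.

Lemma U_mono t1 t2 : 0 <= t1 <= t2 -> U t2 <= U t1.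
Proof.
  intros Ht. pose proof (U_drop t1 t2 0 Ht) as H.
  assert (U t2 <= U t1 - 0 * (t2 - t1)); [|lra]. apply H.
  intros x Hx. destruct (Phi_ge0_parts x ltac:(lra)) as [A1 [A2 A3]]. unfold Phi. lra.
Qed.

Lemma U_low t : 0 <= t ->
  T2 * gf (T t / T2) <= U t /\ I2 * gf (I t / I2) <= U t /\ cVc * (V2 * gf (V t / V2)) <= U t /\ 0 <= U t.
Proof.
  intros Ht. destruct (pos t ltac:(lra)) as [P1 [P2 P3]].
  assert (0 <= T2 * gf (T t / T2)) by (apply Rmult_le_pos; [lra|apply gf_ge0; apply Rdiv_lt_0_compat; lra]).
  assert (0 <= I2 * gf (I t / I2)) by (apply Rmult_le_pos; [lra|apply gf_ge0; apply Rdiv_lt_0_compat; lra]).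
  assert (0 <= V2 * gf (V t / V2)) by (apply Rmult_le_pos; [lra|apply gf_ge0; apply Rdiv_lt_0_compat; lra]).
  assert (0 <= cVc * (V2 * gf (V t / V2))) by (apply Rmult_le_pos; [left; apply cVc_pos|lra]).
  assert (0 <= F2 * J t) by (apply Rmult_le_pos; [left; apply F2pos|apply J_ge0]).
  unfold U. repeat split; lra.
Qed.

Definition U0 := U 0.
Lemma U0_ge0 : 0 <= U0.
Proof. unfold U0. destruct (U_low 0 ltac:(lra)) as [_ [_ [_ H]]]. exact H. Qed.

Lemma bnd_helper K Xs X W : 0 < K -> 0 < Xs -> 0 < X -> K * gf (X / Xs) <= W ->
  X <= 2 * (W / K + 1) * Xs.
Proof.
  intros HK HXs HX H.
  assert (gf (X / Xs) <= W / K).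
  { apply Rmult_le_reg_l with K; auto. replace (K * (W / K)) with W by (field; lra). lra. }
  pose proof (gf_upper (X / Xs) (W / K) ltac:(apply Rdiv_lt_0_compat; lra) H0).
  apply Rmult_le_compat_r with (r := Xs) in H1; [|lra].
  replace (X / Xs * Xs) with X in H1 by (field; lra). lra.
Qed.

Definition MT := 2 * (U0 / T2 + 1) * T2.
Definition MI := 2 * (U0 / I2 + 1) * I2.
Definition MV := 2 * (U0 / (cVc * V2) + 1) * V2.

Lemma bnd t : 0 <= t -> T t <= MT /\ I t <= MI /\ V t <= MV.
Proof.
  intros Ht. destruct (pos t ltac:(lra)) as [P1 [P2 P3]].
  destruct (U_low t Ht) as [L1 [L2 [L3 _]]].
  pose proof (U_mono 0 t ltac:(lra)). fold U0 in H.
  pose proof cVc_pos.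
  split; [|split].
  - apply bnd_helper; auto. lra.
  - apply bnd_helper; auto. lra.
  - apply bnd_helper; auto. apply Rmult_lt_0_compat; auto.
    rewrite <- Rmult_assoc in L3. lra.
Qed.

Lemma MT_pos : 0 < MT.
Proof. unfold MT. pose proof U0_ge0. assert (0 <= U0 / T2) by (apply Rdiv_le_0_compat; lra). nra. Qed.
Lemma MI_pos : 0 < MI.
Proof. unfold MI. pose proof U0_ge0. assert (0 <= U0 / I2) by (apply Rdiv_le_0_compat; lra). nra. Qed.
Lemma MV_pos : 0 < MV.
Proof. unfold MV. pose proof U0_ge0. pose proof cVc_pos.
  assert (0 <= U0 / (cVc * V2)) by (apply Rdiv_le_0_compat; [lra|apply Rmult_lt_0_compat; lra]). nra. Qed.

Definition dT x := s - d * T x + a * T x * logist Tmax (T x) (I x) - incid b alpha (T x) (V x).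
Definition dI x := incid b alpha (T (x - tau)) (V (x - tau)) + a * I x * logist Tmax (T x) (I x) - mu * I x.
Definition dV x := p * I x - c * V x.

Definition LM := (MT + MI) / Tmax.
Definition KT := s + d * MT + a * MT + a * MT * LM + b * MT / alpha.
Definition KI := b * MT / alpha + a * MI + a * MI * LM + mu * MI.
Definition KV := p * MI + c * MV.

Lemma LM_ge0 : 0 <= LM.
Proof. unfold LM. pose proof MT_pos. pose proof MI_pos. apply Rdiv_le_0_compat; lra. Qed.

Lemma L_bnd x : 0 <= x -> 0 <= (T x + I x) / Tmax <= LM.
Proof.
  intros Hx. destruct (pos x ltac:(lra)) as [P1 [P2 P3]]. destruct (bnd x Hx) as [B1 [B2 B3]].
  unfold LM. split. apply Rdiv_le_0_compat; lra.
  unfold Rdiv. apply Rmult_le_compat_r. left; apply Rinv_0_lt_compat; lra. lra.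
Qed.

Lemma dT_bnd x : tau + 1 < x -> Rabs (dT x) <= KT.
Proof.
  intros Hx. destruct (pos x ltac:(lra)) as [P1 [P2 P3]]. destruct (bnd x ltac:(lra)) as [B1 [B2 B3]].
  destruct (L_bnd x ltac:(lra)) as [L1 L2].
  pose proof (incid_bounds b alpha (T x) (V x) hb halpha P1 ltac:(lra)) as [I1 I2'].
  assert (b * T x / alpha <= b * MT / alpha) by (unfold Rdiv; apply Rmult_le_compat_r; [left; apply Rinv_0_lt_compat; lra| nra]).
  assert (T x * ((T x + I x) / Tmax) <= MT * LM) by (apply Rmult_le_compat; lra).
  assert (0 <= MT * LM) by (pose proof LM_ge0; pose proof MT_pos; nra).
  unfold dT, logist, KT. set (L := (T x + I x) / Tmax) in *.
  replace (a * T x * (1 - L)) with (a * T x - a * (T x * L)) by ring.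
  replace (a * MT * LM) with (a * (MT * LM)) by ring.
  assert (a * (T x * L) <= a * (MT * LM)) by (apply Rmult_le_compat_l; lra).
  assert (0 <= a * (T x * L)) by (apply Rmult_le_pos; nra).
  assert (d * T x <= d * MT) by (apply Rmult_le_compat_l; lra).
  assert (a * T x <= a * MT) by (apply Rmult_le_compat_l; lra).
  assert (0 <= d * T x) by nra. assert (0 <= a * T x) by nra.
  apply Rabs_le. split; lra.
Qed.

Lemma dI_bnd x : tau + 1 < x -> Rabs (dI x) <= KI.
Proof.
  intros Hx. destruct (pos x ltac:(lra)) as [P1 [P2 P3]]. destruct (bnd x ltac:(lra)) as [B1 [B2 B3]].
  destruct (pos (x - tau) ltac:(lra)) as [Q1 [Q2 Q3]]. destruct (bnd (x - tau) ltac:(lra)) as [C1 [C2 C3]].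
  destruct (L_bnd x ltac:(lra)) as [L1 L2].
  pose proof (incid_bounds b alpha (T (x - tau)) (V (x - tau)) hb halpha Q1 ltac:(lra)) as [I1 I2'].
  assert (b * T (x - tau) / alpha <= b * MT / alpha) by (unfold Rdiv; apply Rmult_le_compat_r; [left; apply Rinv_0_lt_compat; lra| nra]).
  assert (I x * ((T x + I x) / Tmax) <= MI * LM) by (apply Rmult_le_compat; lra).
  assert (0 <= MI * LM) by (pose proof LM_ge0; pose proof MI_pos; nra).
  unfold dI, logist, KI. set (L := (T x + I x) / Tmax) in *.
  replace (a * I x * (1 - L)) with (a * I x - a * (I x * L)) by ring.
  replace (a * MI * LM) with (a * (MI * LM)) by ring.
  assert (a * (I x * L) <= a * (MI * LM)) by (apply Rmult_le_compat_l; lra).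
  assert (0 <= a * (I x * L)) by (apply Rmult_le_pos; nra).
  assert (mu * I x <= mu * MI) by (apply Rmult_le_compat_l; lra).
  assert (a * I x <= a * MI) by (apply Rmult_le_compat_l; lra).
  assert (0 <= mu * I x) by nra. assert (0 <= a * I x) by nra.
  apply Rabs_le. split; lra.
Qed.

Lemma dV_bnd x : tau + 1 < x -> Rabs (dV x) <= KV.
Proof.
  intros Hx. destruct (pos x ltac:(lra)) as [P1 [P2 P3]]. destruct (bnd x ltac:(lra)) as [B1 [B2 B3]].
  unfold dV, KV.
  assert (p * I x <= p * MI) by (apply Rmult_le_compat_l; lra).
  assert (c * V x <= c * MV) by (apply Rmult_le_compat_l; lra).
  assert (0 <= p * I x) by nra. assert (0 <= c * V x) by nra.
  apply Rabs_le. split; lra.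
Qed.

Lemma KT_ge0 : 0 <= KT.
Proof. pose proof (dT_bnd (tau + 2) ltac:(lra)). pose proof (Rabs_pos (dT (tau + 2))). lra. Qed.
Lemma KI_ge0 : 0 <= KI.
Proof. pose proof (dI_bnd (tau + 2) ltac:(lra)). pose proof (Rabs_pos (dI (tau + 2))). lra. Qed.
Lemma KV_ge0 : 0 <= KV.
Proof. pose proof (dV_bnd (tau + 2) ltac:(lra)). pose proof (Rabs_pos (dV (tau + 2))). lra. Qed.

Lemma derT x : 0 < x -> is_derive T x (dT x).
Proof. intros. destruct Hsol as [_ [_ [_ Hd]]]. apply Hd; auto. Qed.
Lemma derI x : 0 < x -> is_derive I x (dI x).
Proof. intros. destruct Hsol as [_ [_ [_ Hd]]]. apply Hd; auto. Qed.
Lemma derV x : 0 < x -> is_derive V x (dV x).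
Proof. intros. destruct Hsol as [_ [_ [_ Hd]]]. apply Hd; auto. Qed.

Lemma limT : forall e, 0 < e -> exists N, forall t, N <= t -> Rabs (T t - T2) < e.
Proof.
  apply (attract U T T2 (tau + 1) (KT + 1)).
  - pose proof KT_ge0; lra.
  - intros t Ht. apply (U_low t ltac:(lra)).
  - intros t1 t2 Ht. apply U_mono; lra.
  - apply (lip T dT (tau + 1) (KT + 1)).
    + intros; apply contT.
    + intros; apply derT; lra.
    + intros x Hx. pose proof (dT_bnd x Hx). lra.
  - intros e He. pose proof MT_pos.
    set (rho := Rmin (e / MT) (1/2)).
    assert (Hr : 0 < rho < 1).
    { unfold rho. split. apply Rmin_glb_lt. apply Rdiv_lt_0_compat; lra. lra.
      pose proof (Rmin_r (e / MT) (1/2)). lra. }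
    destruct (gf_away rho Hr) as [cg [Hcg Hg]].
    exists (F2 * cg). split. pose proof F2pos. nra.
    intros t1 t2 Ht Hx. apply U_drop. lra.
    intros x Hx'. specialize (Hx x Hx').
    destruct (Phi_ge0_parts x ltac:(lra)) as [A1 [A2 A3]].
    destruct (pos x ltac:(lra)) as [P1 [P2 P3]]. destruct (bnd x ltac:(lra)) as [B1 [B2 B3]].
    assert (cg <= gf (T2 / T x)).
    { apply Hg. apply Rdiv_lt_0_compat; lra.
      replace (T2 / T x - 1) with ((T2 - T x) / T x) by (field; lra).
      rewrite Rabs_div by lra. rewrite (Rabs_right (T x)) by lra.
      rewrite Rabs_minus_sym.
      apply Rle_trans with (e / MT). apply Rmin_l.
      apply frac_mono; lra. }
    pose proof F2pos.
    assert (F2 * cg <= F2 * gf (T2 / T x)) by (apply Rmult_le_compat_l; lra).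
    unfold Phi. lra.
Qed.

Lemma limS : forall e, 0 < e -> exists N, forall t, N <= t -> Rabs ((T t + I t) - (T2 + I2)) < e.
Proof.
  apply (attract U (fun t => T t + I t) (T2 + I2) (tau + 1) (KT + KI + 1)).
  - pose proof KT_ge0; pose proof KI_ge0; lra.
  - intros t Ht. apply (U_low t ltac:(lra)).
  - intros t1 t2 Ht. apply U_mono; lra.
  - apply (lip (fun t => T t + I t) (fun x => dT x + dI x) (tau + 1) (KT + KI + 1)).
    + intros; apply cplus; [apply contT|apply contI].
    + intros; apply dplus; [apply derT|apply derI]; lra.
    + intros x Hx. pose proof (dT_bnd x Hx). pose proof (dI_bnd x Hx).
      pose proof (Rabs_triang (dT x) (dI x)). lra.
  - intros e He.
    exists (a * e^2 / Tmax). split. apply Rdiv_lt_0_compat; [|lra]. apply Rmult_lt_0_compat; [lra|]. apply pow_lt; lra.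
    intros t1 t2 Ht Hx. apply U_drop. lra.
    intros x Hx'. specialize (Hx x Hx').
    destruct (Phi_ge0_parts x ltac:(lra)) as [A1 [A2 A3]].
    assert (e^2 <= (T x - T2 + I x - I2)^2).
    { replace (T x - T2 + I x - I2) with (T x + I x - (T2 + I2)) by ring.
      rewrite <- (pow2_abs (T x + I x - (T2 + I2))). apply pow_incr. lra. }
    assert (a * e^2 / Tmax <= a * (T x - T2 + I x - I2)^2 / Tmax).
    { unfold Rdiv. apply Rmult_le_compat_r. left; apply Rinv_0_lt_compat; lra.
      apply Rmult_le_compat_l; lra. }
    unfold Phi. lra.
Qed.

Lemma limV : forall e, 0 < e -> exists N, forall t, N <= t -> Rabs (V t - V2) < e.
Proof.
  apply (attract U V V2 (tau + 1) (KV + 1)).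
  - pose proof KV_ge0; lra.
  - intros t Ht. apply (U_low t ltac:(lra)).
  - intros t1 t2 Ht. apply U_mono; lra.
  - apply (lip V dV (tau + 1) (KV + 1)).
    + intros; apply contV.
    + intros; apply derV; lra.
    + intros x Hx. pose proof (dV_bnd x Hx). lra.
  - intros e He. pose proof MV_pos. pose proof F2pos.
    assert (0 < alpha * MV) by nra. assert (0 < alpha * V2) by nra.
    assert (Hden : 0 < V2 * (1 + alpha * MV) * (1 + alpha * V2)) by
      (apply Rmult_lt_0_compat; [apply Rmult_lt_0_compat|]; lra).
    exists (F2 * alpha * e^2 / (V2 * (1 + alpha * MV) * (1 + alpha * V2))). split.
    { apply Rdiv_lt_0_compat; [|lra]. apply Rmult_lt_0_compat; [nra|]. apply pow_lt; lra. }
    intros t1 t2 Ht Hx. apply U_drop. lra.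
    intros x Hx'. specialize (Hx x Hx').
    destruct (Phi_ge0_parts x ltac:(lra)) as [A1 [A2 A3]].
    destruct (pos x ltac:(lra)) as [P1 [P2 P3]]. destruct (bnd x ltac:(lra)) as [B1 [B2 B3]].
    assert (e^2 <= (V x - V2)^2).
    { rewrite <- (pow2_abs (V x - V2)). apply pow_incr. lra. }
    assert (F2 * alpha * e^2 / (V2 * (1 + alpha * MV) * (1 + alpha * V2)) <=
            F2 * alpha * (V x - V2)^2 / (V2 * (1 + alpha * V x) * (1 + alpha * V2))).
    { apply frac_mono.
      - apply Rmult_le_pos; [nra|apply pow2_ge_0].
      - apply Rmult_le_compat_l; nra.
      - apply Rmult_lt_0_compat; [apply Rmult_lt_0_compat|]; nra.
      - apply Rmult_le_compat_r. lra. apply Rmult_le_compat_l. lra.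
        assert (alpha * V x <= alpha * MV) by (apply Rmult_le_compat_l; lra). lra. }
    unfold Phi. lra.
Qed.

Lemma limI : forall e, 0 < e -> exists N, forall t, N <= t -> Rabs (I t - I2) < e.
Proof.
  intros e He. destruct (limT (e/2) ltac:(lra)) as [N1 H1]. destruct (limS (e/2) ltac:(lra)) as [N2 H2].
  exists (Rmax N1 N2). intros t Ht.
  specialize (H1 t ltac:(pose proof (Rmax_l N1 N2); lra)).
  specialize (H2 t ltac:(pose proof (Rmax_r N1 N2); lra)).
  replace (I t - I2) with ((T t + I t - (T2 + I2)) - (T t - T2)) by ring.
  pose proof (Rabs_triang (T t + I t - (T2 + I2)) (- (T t - T2))).
  rewrite Rabs_Ropp in H. unfold Rminus at 1. lra.
Qed.

Definition Qc := 2 * (T2 + I2 + cVc * V2) + 36 * F2 * tau.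

Lemma U0_bound rho : 0 < rho <= 1/2 ->
  (forall th, -tau <= th <= 0 -> Rabs (T th - T2) <= rho * T2 /\ Rabs (I th - I2) <= rho * I2 /\ Rabs (V th - V2) <= rho * V2) ->
  U 0 <= rho^2 * Qc.
Proof.
  intros Hr Hh.
  assert (Hrel : forall X Xs, 0 < Xs -> Rabs (X - Xs) <= rho * Xs -> Rabs (X / Xs - 1) <= rho).
  { intros X Xs HXs HX. destruct (rel_dev X Xs HXs) as [_ R2].
    apply Rmult_le_reg_r with Xs; auto. lra. }
  destruct (Hh 0 ltac:(lra)) as [H1 [H2 H3]].
  pose proof (gf_near1 rho (T 0 / T2) Hr (Hrel _ _ hT2 H1)).
  pose proof (gf_near1 rho (I 0 / I2) Hr (Hrel _ _ hI2 H2)).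
  pose proof (gf_near1 rho (V 0 / V2) Hr (Hrel _ _ hV2 H3)).
  assert (HJ : J 0 <= tau * (36 * rho^2)).
  { unfold J. replace (0 - tau) with (- tau) by ring.
    apply Rle_trans with (RInt (fun _ => 36 * rho^2) (-tau) 0).
    - apply RInt_le. lra. apply exR. apply ex_RInt_const.
      intros x Hx. unfold Gc. rewrite clamp_id by lra. unfold Gv.
      destruct (Hh x ltac:(lra)) as [K1 [K2 K3]].
      apply gf_near2. lra.
      apply incid_ratio; auto; try lra; apply Hrel; auto.
    - rewrite RInt_const. unfold scal; simpl; unfold mult; simpl. lra. }
  pose proof cVc_pos. pose proof F2pos.
  unfold U, Qc.
  assert (T2 * gf (T 0 / T2) <= T2 * (2 * rho^2)) by (apply Rmult_le_compat_l; lra).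
  assert (I2 * gf (I 0 / I2) <= I2 * (2 * rho^2)) by (apply Rmult_le_compat_l; lra).
  assert (cVc * (V2 * gf (V 0 / V2)) <= cVc * (V2 * (2 * rho^2))) by
    (apply Rmult_le_compat_l; [lra|apply Rmult_le_compat_l; lra]).
  assert (F2 * J 0 <= F2 * (tau * (36 * rho^2))) by (apply Rmult_le_compat_l; lra).
  lra.
Qed.

Lemma sol_facts :
  (forall rho, 0 < rho <= 1/2 ->
    (forall th, -tau <= th <= 0 -> Rabs (T th - T2) <= rho * T2 /\ Rabs (I th - I2) <= rho * I2 /\ Rabs (V th - V2) <= rho * V2) ->
    forall t, 0 <= t ->
      T2 * gf (T t / T2) <= rho^2 * Qc /\ I2 * gf (I t / I2) <= rho^2 * Qc /\
      cVc * (V2 * gf (V t / V2)) <= rho^2 * Qc) /\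
  (forall t, 0 <= t -> 0 < T t /\ 0 < I t /\ 0 < V t) /\
  is_lim T p_infty T2 /\ is_lim I p_infty I2 /\ is_lim V p_infty V2.
Proof.
  split; [|split; [|split; [|split]]].
  - intros rho Hr Hh t Ht. pose proof (U0_bound rho Hr Hh).
    pose proof (U_mono 0 t ltac:(lra)). destruct (U_low t Ht) as [A1 [A2 [A3 _]]].
    repeat split; lra.
  - intros t Ht. apply pos; lra.
  - apply lim_of, limT.
  - apply lim_of, limI.
  - apply lim_of, limV.
Qed.

End Lyap.

Lemma stab_helper W Xs X eps rhoT cg : 0 < W -> 0 < Xs -> 0 < X -> 0 < rhoT -> rhoT <= eps / Xs ->
  (forall r, 0 < r -> rhoT <= Rabs (r - 1) -> cg <= gf r) ->
  W * gf (X / Xs) < W * cg -> Rabs (X - Xs) < eps.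
Proof.
  intros HW HXs HX Hr Hre Hg Hlt.
  assert (gf (X / Xs) < cg) by (apply Rmult_lt_reg_l with W; auto).
  assert (Rabs (X / Xs - 1) < rhoT).
  { apply Rnot_le_lt. intros Hc. pose proof (Hg (X / Xs) ltac:(apply Rdiv_lt_0_compat; lra) Hc). lra. }
  destruct (rel_dev X Xs HXs) as [R1 _].
  assert (Rabs (X / Xs - 1) * Xs < rhoT * Xs) by (apply Rmult_lt_compat_r; lra).
  assert (rhoT * Xs <= eps / Xs * Xs) by (apply Rmult_le_compat_r; lra).
  replace (eps / Xs * Xs) with eps in H2 by (field; lra). lra.
Qed.

Lemma get_cg Xs eps : 0 < Xs -> 0 < eps -> exists rhoT cg, 0 < rhoT /\ rhoT <= eps / Xs /\ 0 < cg /\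
  (forall r, 0 < r -> rhoT <= Rabs (r - 1) -> cg <= gf r).
Proof.
  intros HXs He. set (rhoT := Rmin (eps / Xs) (1/2)).
  assert (Hr : 0 < rhoT < 1).
  { unfold rhoT. split. apply Rmin_glb_lt. apply Rdiv_lt_0_compat; lra. lra.
    pose proof (Rmin_r (eps / Xs) (1/2)). lra. }
  destruct (gf_away rhoT Hr) as [cg [Hcg Hg]].
  exists rhoT, cg. repeat split; auto; try lra. apply Rmin_l.
Qed.

Theorem theorem4 (s d a Tmax b alpha mu p c tau : R)
  (hs : 0 < s) (hd : 0 < d) (ha : 0 < a) (hTmax : 0 < Tmax) (hb : 0 < b)
  (halpha : 0 < alpha) (hmu : 0 < mu) (hp : 0 < p) (hc : 0 < c) (htau : 0 <= tau)
  (hR0 : basic_R0 s d a Tmax b mu p c > 1)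
  (T2 I2 V2 : R) (hT2 : 0 < T2) (hI2 : 0 < I2) (hV2 : 0 < V2)
  (heq : is_equilibrium s d a Tmax b alpha mu p c T2 I2 V2)
  (hcond : a <= d + a / Tmax * (T2 + I2)) :
  GAS s d a Tmax b alpha mu p c tau T2 I2 V2.
Proof.
  set (Q := Qc b alpha p tau T2 I2 V2). set (kv := cVc b alpha p T2 I2 V2).
  assert (HF2 : 0 < F2 b alpha T2 V2) by (unfold F2; apply incid_pos; auto).
  assert (Hkv : 0 < kv) by (unfold kv, cVc; apply Rdiv_lt_0_compat; [auto|nra]).
  assert (HQ : 0 <= Q).
  { unfold Q, Qc. fold kv. assert (0 <= kv * V2) by nra.
    assert (0 <= F2 b alpha T2 V2 * tau) by nra. nra. }
  split.
  - intros eps Heps.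
    destruct (get_cg T2 eps hT2 Heps) as [rT [cT [HrT [HrT' [HcT HgT]]]]].
    destruct (get_cg I2 eps hI2 Heps) as [rI [cI [HrI [HrI' [HcI HgI]]]]].
    destruct (get_cg V2 eps hV2 Heps) as [rV [cV [HrV [HrV' [HcV HgV]]]]].
    set (eta := Rmin (T2 * cT) (Rmin (I2 * cI) (kv * V2 * cV))).
    assert (Heta : 0 < eta).
    { unfold eta. repeat apply Rmin_glb_lt; apply Rmult_lt_0_compat; try apply Rmult_lt_0_compat; lra. }
    assert (E1 : eta <= T2 * cT) by apply Rmin_l.
    assert (E2 : eta <= I2 * cI) by (eapply Rle_trans; [apply Rmin_r|apply Rmin_l]).
    assert (E3 : eta <= kv * V2 * cV) by (eapply Rle_trans; [apply Rmin_r|apply Rmin_r]).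
    set (rho := Rmin (1/2) (eta / (2 * (Q + 1)))).
    assert (Hrho : 0 < rho <= 1/2).
    { unfold rho. split. apply Rmin_glb_lt. lra. apply Rdiv_lt_0_compat; lra. apply Rmin_l. }
    assert (Hrho2 : rho <= eta / (2 * (Q + 1))) by apply Rmin_r.
    assert (HrQ : rho^2 * Q < eta).
    { assert (rho * (2 * (Q + 1)) <= eta).
      { apply Rmult_le_reg_r with (/ (2 * (Q + 1))). apply Rinv_0_lt_compat; lra.
        rewrite Rmult_assoc, Rinv_r by lra. lra. }
      nra. }
    set (m := Rmin T2 (Rmin I2 V2)).
    assert (Hm : 0 < m) by (unfold m; repeat apply Rmin_glb_lt; lra).
    assert (M1 : m <= T2) by apply Rmin_l.
    assert (M2 : m <= I2) by (eapply Rle_trans; [apply Rmin_r|apply Rmin_l]).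
    assert (M3 : m <= V2) by (eapply Rle_trans; [apply Rmin_r|apply Rmin_r]).
    exists (rho * m). split. nra.
    intros T I V Hsol Hinit Hh t Ht.
    destruct (sol_facts s d a Tmax b alpha mu p c tau hs hd ha hTmax hb halpha hmu hp hc htau
                T2 I2 V2 hT2 hI2 hV2 heq hcond T I V Hsol Hinit) as [Hst [Hpos _]].
    assert (Hh' : forall th, -tau <= th <= 0 -> Rabs (T th - T2) <= rho * T2 /\
               Rabs (I th - I2) <= rho * I2 /\ Rabs (V th - V2) <= rho * V2).
    { intros th Hth. destruct (Hh th Hth) as [K1 [K2 K3]].
      assert (rho * m <= rho * T2) by (apply Rmult_le_compat_l; lra).
      assert (rho * m <= rho * I2) by (apply Rmult_le_compat_l; lra).
      assert (rho * m <= rho * V2) by (apply Rmult_le_compat_l; lra).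
      repeat split; lra. }
    destruct (Hst rho Hrho Hh' t Ht) as [S1 [S2 S3]]. fold Q kv in S1, S2, S3.
    destruct (Hpos t Ht) as [P1 [P2 P3]].
    split; [|split].
    + apply (stab_helper T2 T2 (T t) eps rT cT); auto. lra.
    + apply (stab_helper I2 I2 (I t) eps rI cI); auto. lra.
    + apply (stab_helper (kv * V2) V2 (V t) eps rV cV); auto. nra.
      rewrite Rmult_assoc. lra.
  - intros T I V Hsol Hinit.
    destruct (sol_facts s d a Tmax b alpha mu p c tau hs hd ha hTmax hb halpha hmu hp hc htau
                T2 I2 V2 hT2 hI2 hV2 heq hcond T I V Hsol Hinit) as [_ [_ H]]. exact H.
Qed.
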